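(* Let $A$ be a finitely generated algebra over $B=\bigoplus_{s=1}^K\Bbbk e_s$, $\alpha\in\mathbb N^K$, $N=\sum_s\alpha_s$, $R=\mathcal O(\operatorname{Rep}(A,\alpha))$, and $Q\in(D_BA)_3$ with associated differential triple bracket $\{\!\{-,-,-\}\!\}_Q$. Then for all $a,b,c\in A$ and $1\le i,j,k,l,u,v\le N$, $$\operatorname{tr}\mathcal X(Q)(a_{ij},b_{kl},c_{uv})=(\{\!\{a,b,c\}\!\}_Q)_{uj,il,kv}-(\{\!\{a,c,b\}\!\}_Q)_{kj,iv,ul},$$ where for $x=x'\otimes x''\otimes x'''\in A^{\otimes3}$ we write $x_{pq,rs,yz}=x'_{pq}x''_{rs}x'''_{yz}$ (extended linearly).
   Context: $\Bbbk$ field of characteristic $0$, $\otimes=\otimes_\Bbbk$, $(e_s)$ complete orthogonal idempotents. $R$ is the commutative $\Bbbk$-algebra generated by $a_{ij}$ ($a\in A$, $1\le i,j\le N$) with $(a+b)_{ij}=a_{ij}+b_{ij}$, $(ab)_{ij}=\sum_ka_{ik}b_{kj}$, and $(e_s)_{ij}=\delta_{ij}$ if $\alpha_1+\cdots+\alpha_{s-1}<i,j\le\alpha_1+\cdots+\alpha_s$, $0$ otherwise. $D_{A/B}=\operatorname{Der}_B(A,A\otimes A)$ (outer structure $x(d'\otimes d'')y=xd'\otimes d''y$) with bimodule structure $(b\delta c)(a)=\delta(a)'c\otimes b\delta(a)''$; $D_BA=T_AD_{A/B}$. For $\delta\in D_{A/B}$, $\delta_{ij}\in\operatorname{Der}(R)$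 with $\delta_{ij}(b_{kl})=\delta(b)'_{kj}\delta(b)''_{il}$; for $Q=\delta_1\delta_2\delta_3$, $\mathcal X(Q)=\mathcal X(\delta_1)\mathcal X(\delta_2)\mathcal X(\delta_3)$ as matrices with entries in $\bigwedge^3_R\operatorname{Der}(R)$, $\operatorname{tr}\mathcal X(Q)=\sum_i\mathcal X(Q)_{ii}$, extended linearly; $(\xi_1\wedge\xi_2\wedge\xi_3)(f_1,f_2,f_3)=\sum_{\sigma\in S_3}\epsilon(\sigma)\xi_1(f_{\sigma(1)})\xi_2(f_{\sigma(2)})\xi_3(f_{\sigma(3)})$. With $\tau=\tau_{(123)}$, $\tau(x_1\otimes x_2\otimes x_3)=x_3\otimes x_1\otimes x_2$, $\{\!\{-,-,-\}\!\}_Q=\sum_{i=0}^{2}\tau^i\circ\widetilde{\{\!\{\}\!\}}_Q\circ\tau^{-i}$ with $\widetilde{\{\!\{a_1,a_2,a_3\}\!\}}_Q=\delta_3(a_3)'\delta_1(a_1)''\otimes\delta_1(a_1)'\delta_2(a_2)''\otimes\delta_2(a_2)'\delta_3(a_3)''$, extended linearly in $Q$ ($\tau^{-i}$ acting on the argument triple by the same cyclic permutation). *)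

(* Defs.v *)
From HB Require Import structures.
From mathcomp Require Import all_boot all_order all_algebra all_fingroup.
Set Implicit Arguments. Unset Strict Implicit. Unset Printing Implicit Defensive.
Import GRing.Theory.
Local Open Scope ring_scope.

(* k-algebras are rings A together with a ring morphism fA : k -> A whose    *)
(* image is central (scalar multiplication c . x := fA c * x).  We use       *)
(* pzRingType so that the zero ring is allowed.                              *)

Section Defs.
Variables (k : fieldType) (A : pzRingType) (fA : {rmorphism k -> A}).

Definition central_image : Prop := forall c x, fA c * x = x * fA c.

Definition complete_orth_idem (K : nat) (e : 'I_K -> A) : Prop :=
  (forall s t, e s * e t = if s == t then e s else 0) /\ \sum_(s < K) e s = 1.

Definition fin_gen_over_B (K : nat) (e : 'I_K -> A) : Prop :=
  exists gens : seq A, forall P : A -> Prop,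
    (forall c, P (fA c)) -> (forall s, P (e s)) -> (forall x, x \in gens -> P x) ->
    (forall x y, P x -> P y -> P (x + y)) -> (forall x y, P x -> P y -> P (x * y)) ->
    forall x, P x.

(* Tensor powers A^{\otimes 2} over k: an element is represented by a finite *)
(* formal sum  sum_i x_i (x) y_i  (a seq of pairs); two formal sums denote   *)
(* the same tensor iff every k-bilinear map takes the same value on them     *)
(* (universal property of the tensor product).                               *)
Definition tens2 := seq (A * A).

Definition bilinear_k (V : lmodType k) (phi : A -> A -> V) : Prop :=
  (forall x1 x2 y, phi (x1 + x2) y = phi x1 y + phi x2 y) /\
  (forall x y1 y2, phi x (y1 + y2) = phi x y1 + phi x y2) /\
  (forall c x y, phi (fA c * x) y = c *: phi x y) /\
  (forall c x y, phi x (fA c * y) = c *: phi x y).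

Definition teq2 (t1 t2 : tens2) : Prop :=
  forall (V : lmodType k) (phi : A -> A -> V), bilinear_k phi ->
    \sum_(p <- t1) phi p.1 p.2 = \sum_(p <- t2) phi p.1 p.2.

(* Double derivations D_{A/B} = Der_B(A, A (x) A) with the outer bimodule    *)
(* structure x (d' (x) d'') y = x d' (x) d'' y; represented by a function    *)
(* choosing a formal-sum representative of delta(a) for each a.              *)
Definition ddertype := A -> tens2.

Definition is_double_der (K : nat) (e : 'I_K -> A) (delta : ddertype) : Prop :=
  (forall x y, teq2 (delta (x + y)) (delta x ++ delta y)) /\
  (forall c x, teq2 (delta (fA c * x)) [seq (fA c * p.1, p.2) | p <- delta x]) /\
  (forall x y, teq2 (delta (x * y))
      ([seq (p.1, p.2 * y) | p <- delta x] ++ [seq (x * p.1, p.2) | p <- delta y])) /\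
  (forall s, teq2 (delta (e s)) [::]).

Variables (K : nat) (e : 'I_K -> A) (alpha : 'I_K -> nat).

Definition dimN : nat := \sum_(s < K) alpha s.

(* block start  alpha_1 + ... + alpha_{s-1}  (0-based indices) *)
Definition blk_start (s : 'I_K) : nat := \sum_(t < K | (t < s)%N) alpha t.

Definition blockE (S : pzRingType) (s : 'I_K) : 'M[S]_dimN :=
  \matrix_(i, j) (if (i == j) && (blk_start s <= i)%N && (i < blk_start s + alpha s)%N
                  then 1 else 0).

(* r : A -> M_N(S) is a k-algebra morphism with e_s |-> blockE s, i.e. the  *)
(* defining relations of O(Rep(A,alpha)) hold for the entries r(a)_{ij}.     *)
Definition is_rep (S : comPzRingType) (fS : {rmorphism k -> S})
    (r : A -> 'M[S]_dimN) : Prop :=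
  (forall x y, r (x + y) = r x + r y) /\
  (forall x y, r (x * y) = r x *m r y) /\
  r 1 = 1%:M /\
  (forall c x, r (fA c * x) = (fS c)%:M *m r x) /\
  (forall s, r (e s) = blockE S s).

(* (R, fR, rho) is the coordinate ring R = O(Rep(A,alpha)) with rho a = (a_ij): *)
(* the universal commutative k-algebra with a representation                 *)
Definition is_coord_ring (R : comPzRingType) (fR : {rmorphism k -> R})
    (rho : A -> 'M[R]_dimN) : Prop :=
  is_rep fR rho /\
  forall (S : comPzRingType) (fS : {rmorphism k -> S}) (r : A -> 'M[S]_dimN),
    is_rep fS r ->
    exists phi : {rmorphism R -> S},
      ((forall c, phi (fR c) = fS c) /\ (forall x i j, phi (rho x i j) = r x i j)) /\
      (forall psi : {rmorphism R -> S},
         (forall c, psi (fR c) = fS c) -> (forall x i j, psi (rho x i j) = r x i j) ->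
         psi =1 phi).

Section Coord.
Variables (R : comPzRingType) (fR : {rmorphism k -> R}) (rho : A -> 'M[R]_dimN).

Definition is_der_R (D : R -> R) : Prop :=
  (forall x y, D (x + y) = D x + D y) /\
  (forall c x, D (fR c * x) = fR c * D x) /\
  (forall x y, D (x * y) = D x * y + x * D y).

Definition is_delta_ij (delta : ddertype) (i j : 'I_dimN) (D : R -> R) : Prop :=
  is_der_R D /\
  forall b (k0 l : 'I_dimN),
    D (rho b k0 l) = \sum_(p <- delta b) rho p.1 k0 j * rho p.2 i l.

Definition wedge3_eval (x1 x2 x3 : R -> R) (f1 f2 f3 : R) : R :=
  let f := fun i : 'I_3 => nth 0 [:: f1; f2; f3] i in
  \sum_(s : 'S_3) (-1) ^+ (odd_perm s) *
     (x1 (f (s (@Ordinal 3 0 isT))) * x2 (f (s (@Ordinal 3 1 isT)))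
       * x3 (f (s (@Ordinal 3 2 isT)))).

(* Q = sum_{t < m} Q1 t Q2 t Q3 t in (D_B A)_3;  dd delta i j = delta_ij.   *)
(* tr X(Q)(f1,f2,f3) where X(Q) = X(d1) X(d2) X(d3), X(d)_{pq} = d_pq, so    *)
(* tr X(Q) = sum_t sum_{p,q,r} (d1_pq /\ d2_qr /\ d3_rp).                    *)
Definition trXQ_eval (m : nat) (Q1 Q2 Q3 : 'I_m -> ddertype)
    (dd : ddertype -> 'I_dimN -> 'I_dimN -> R -> R) (f1 f2 f3 : R) : R :=
  \sum_(t < m) \sum_(p < dimN) \sum_(q < dimN) \sum_(r < dimN)
     wedge3_eval (dd (Q1 t) p q) (dd (Q2 t) q r) (dd (Q3 t) r p) f1 f2 f3.

Definition ev3 (x : seq (A * A * A)) (p q r s y z : 'I_dimN) : R :=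
  \sum_(w <- x) rho w.1.1 p q * rho w.1.2 r s * rho w.2 y z.
End Coord.

Definition tau3 (w : A * A * A) : A * A * A := (w.2, w.1.1, w.1.2).

(* ~{{a1,a2,a3}}_{d1 d2 d3} = d3(a3)'d1(a1)'' (x) d1(a1)'d2(a2)'' (x) d2(a2)'d3(a3)'' *)
Definition tbracket (d1 d2 d3 : ddertype) (a1 a2 a3 : A) : seq (A * A * A) :=
  [seq (z.1 * xy.1.2, xy.1.1 * xy.2.2, xy.2.1 * z.2)
   | xy <- [seq (x, y) | x <- d1 a1, y <- d2 a2], z <- d3 a3].

(* {{a,b,c}}_{d1d2d3} = sum_{i=0}^2 tau^i o ~{{}} o tau^{-i} *)
Definition bracket1 (d1 d2 d3 : ddertype) (a b c : A) : seq (A * A * A) :=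
  tbracket d1 d2 d3 a b c ++ map tau3 (tbracket d1 d2 d3 b c a)
  ++ map (tau3 \o tau3) (tbracket d1 d2 d3 c a b).

Definition bracketQ (m : nat) (Q1 Q2 Q3 : 'I_m -> ddertype) (a b c : A)
  : seq (A * A * A) :=
  flatten [seq bracket1 (Q1 t) (Q2 t) (Q3 t) a b c | t <- enum 'I_m].

End Defs.

(* Main.v *)
Require Import Defs.
From HB Require Import structures.
From mathcomp Require Import all_boot all_order all_algebra all_fingroup.
From mathcomp Require Import ring.
Import GRing.Theory.
Local Open Scope ring_scope.
Lemma det3_expand_nat (R : comPzRingType) (h0 h1 h2 : nat -> R) :
  let o0 := @Ordinal 3 0 isT in let o1 := @Ordinal 3 1 isT in
  let o2 := @Ordinal 3 2 isT in
  \sum_(s : 'S_3) (-1) ^+ (odd_perm s) * (h0 (s o0) * h1 (s o1) * h2 (s o2))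
  = h0 0 * h1 1 * h2 2 + h0 1 * h1 2 * h2 0 + h0 2 * h1 0 * h2 1
    - h0 0 * h1 2 * h2 1 - h0 2 * h1 1 * h2 0 - h0 1 * h1 0 * h2 2.
Proof.
move=> o0 o1 o2.
have E0 : (ord0 : 'I_3) = o0 by apply: val_inj.
have E1 : (lift ord0 ord0 : 'I_3) = o1 by apply: val_inj.
have E2 : (lift ord0 (lift ord0 ord0) : 'I_3) = o2 by apply: val_inj.
pose M := \matrix_(i < 3, j < 3) (nth h0 [:: h0; h1; h2] i) (val j).
have -> : \sum_(s : 'S_3) (-1) ^+ (odd_perm s) * (h0 (s o0) * h1 (s o1) * h2 (s o2)) = \det M.
  rewrite /determinant; apply: eq_bigr => s _.
  by rewrite !big_ord_recl big_ord0 !mxE /= E2 E1 E0 mulr1 !mulrA.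
rewrite (expand_det_row _ ord0) !big_ord_recl big_ord0 /cofactor.
rewrite !(expand_det_row _ ord0) !big_ord_recl !big_ord0 /cofactor.
rewrite !det_mx11 !mxE /= !expr0 !expr1.
ring.
Qed.

Lemma det3_expand (R : comPzRingType) (g0 g1 g2 : 'I_3 -> R) :
  let o0 := @Ordinal 3 0 isT in let o1 := @Ordinal 3 1 isT in
  let o2 := @Ordinal 3 2 isT in
  \sum_(s : 'S_3) (-1) ^+ (odd_perm s) * (g0 (s o0) * g1 (s o1) * g2 (s o2))
  = g0 o0 * g1 o1 * g2 o2 + g0 o1 * g1 o2 * g2 o0 + g0 o2 * g1 o0 * g2 o1
    - g0 o0 * g1 o2 * g2 o1 - g0 o2 * g1 o1 * g2 o0 - g0 o1 * g1 o0 * g2 o2.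
Proof.
move=> o0 o1 o2.
have := @det3_expand_nat _ (fun n => g0 (inord n)) (fun n => g1 (inord n)) (fun n => g2 (inord n)).
move=> /= H.
have e : forall i : 'I_3, (inord (nat_of_ord i) : 'I_3) = i.
  by move=> i; apply: val_inj; rewrite /= inordK.
have e0 : (inord 0 : 'I_3) = o0 by apply: val_inj; rewrite /= inordK.
have e1 : (inord 1 : 'I_3) = o1 by apply: val_inj; rewrite /= inordK.
have e2 : (inord 2 : 'I_3) = o2 by apply: val_inj; rewrite /= inordK.
rewrite e0 e1 e2 in H; rewrite -H; apply: eq_bigr => s _; rewrite !e //.
Qed.
Lemma prod3 (R : comPzRingType) (I J L : Type) (r1 : seq I) (r2 : seq J) (r3 : seq L)
  (F : I -> R) (G : J -> R) (H : L -> R) :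
  (\sum_(i <- r1) F i) * (\sum_(j <- r2) G j) * (\sum_(l <- r3) H l)
  = \sum_(i <- r1) \sum_(j <- r2) \sum_(l <- r3) (F i * G j * H l).
Proof.
rewrite big_distrlr big_distrl; apply: eq_bigr => i _.
rewrite big_distrl; apply: eq_bigr => j _; rewrite big_distrr //.
Qed.

Lemma mv1 (R : comPzRingType) (I J1 J2 J3 : Type) (r : seq I) (s1 : seq J1)
  (s2 : seq J2) (s3 : seq J3) (F : I -> J1 -> J2 -> J3 -> R) :
  \sum_(i <- r) \sum_(x <- s1) \sum_(y <- s2) \sum_(z <- s3) F i x y z
  = \sum_(x <- s1) \sum_(y <- s2) \sum_(z <- s3) \sum_(i <- r) F i x y z.
Proof.
rewrite exchange_big; apply: eq_bigr => x _.
rewrite exchange_big; apply: eq_bigr => y _.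
by rewrite exchange_big.
Qed.

Lemma swap33 (R : comPzRingType) (I1 I2 I3 J1 J2 J3 : Type) (r1 : seq I1)
  (r2 : seq I2) (r3 : seq I3) (s1 : seq J1)
  (s2 : seq J2) (s3 : seq J3) (F : I1 -> I2 -> I3 -> J1 -> J2 -> J3 -> R) :
  \sum_(a <- r1) \sum_(b <- r2) \sum_(c <- r3)
    \sum_(x <- s1) \sum_(y <- s2) \sum_(z <- s3) F a b c x y z
  = \sum_(x <- s1) \sum_(y <- s2) \sum_(z <- s3)
    \sum_(a <- r1) \sum_(b <- r2) \sum_(c <- r3) F a b c x y z.
Proof.
under eq_bigr => a _ do under eq_bigr => b _ do rewrite mv1.
under eq_bigr => a _ do rewrite mv1.
by rewrite mv1.
Qed.

Lemma key (A : pzRingType) (K : nat) (alpha : 'I_K -> nat) (R : comPzRingType)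
  (rho : A -> 'M[R]_(dimN alpha))
  (hmul : forall x y, rho (x * y) = rho x *m rho y)
  (D : ddertype A -> 'I_(dimN alpha) -> 'I_(dimN alpha) -> R -> R)
  (d1 d2 d3 : ddertype A)
  (hD : forall d, (d = d1 \/ d = d2 \/ d = d3) -> forall p q b k0 l,
      D d p q (rho b k0 l) = \sum_(w <- d b) rho w.1 k0 q * rho w.2 p l)
  (x y z : A) (al be ga de ep ze : 'I_(dimN alpha)) :
  \sum_(p < dimN alpha) \sum_(q < dimN alpha) \sum_(r < dimN alpha)
     (D d1 p q (rho x al be) * D d2 q r (rho y ga de) * D d3 r p (rho z ep ze))
  = ev3 rho (tbracket d1 d2 d3 x y z) ep be al de ga ze.
Proof.
rewrite /ev3 /tbracket big_allpairs_dep big_allpairs_dep /=.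
have h1 := hD d1 (or_introl erefl).
have h2 := hD d2 (or_intror (or_introl erefl)).
have h3 := hD d3 (or_intror (or_intror erefl)).
under eq_bigr => p _ do under eq_bigr => q _ do under eq_bigr => r _ do
  rewrite h1 h2 h3 prod3.
rewrite swap33.
apply: eq_bigr => X _; apply: eq_bigr => Y _; apply: eq_bigr => Z _.
rewrite !hmul !mxE prod3.
apply: eq_bigr => p _; apply: eq_bigr => q _; apply: eq_bigr => r _.
ring.
Qed.

Lemma wedge3E (R : comPzRingType) (x1 x2 x3 : R -> R) (f1 f2 f3 : R) :
  wedge3_eval x1 x2 x3 f1 f2 f3 =
  x1 f1 * x2 f2 * x3 f3 + x1 f2 * x2 f3 * x3 f1 + x1 f3 * x2 f1 * x3 f2
  - x1 f1 * x2 f3 * x3 f2 - x1 f3 * x2 f2 * x3 f1 - x1 f2 * x2 f1 * x3 f3.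
Proof.
have H := (@det3_expand _ (fun j => x1 (nth 0 [:: f1; f2; f3] j))
          (fun j => x2 (nth 0 [:: f1; f2; f3] j)) (fun j => x3 (nth 0 [:: f1; f2; f3] j))).
simpl in H; rewrite /wedge3_eval /= H //.
Qed.

Lemma ev3_cat (A : pzRingType) (K : nat) (alpha : 'I_K -> nat) (R : comPzRingType)
  (rho : A -> 'M[R]_(dimN alpha)) s1 s2 p q r s y z :
  ev3 rho (s1 ++ s2) p q r s y z = ev3 rho s1 p q r s y z + ev3 rho s2 p q r s y z.
Proof. by rewrite /ev3 big_cat. Qed.

Lemma ev3_tau (A : pzRingType) (K : nat) (alpha : 'I_K -> nat) (R : comPzRingType)
  (rho : A -> 'M[R]_(dimN alpha)) s1 p q r s y z :
  ev3 rho (map (@tau3 A) s1) p q r s y z = ev3 rho s1 r s y z p q.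
Proof. rewrite /ev3 big_map; apply: eq_bigr => w _ /=; ring. Qed.

Lemma ev3_bracketQ (A : pzRingType) (K : nat) (alpha : 'I_K -> nat) (R : comPzRingType)
  (rho : A -> 'M[R]_(dimN alpha)) m (Q1 Q2 Q3 : 'I_m -> ddertype A) a b c p q r s y z :
  ev3 rho (bracketQ Q1 Q2 Q3 a b c) p q r s y z
  = \sum_(t < m) ev3 rho (bracket1 (Q1 t) (Q2 t) (Q3 t) a b c) p q r s y z.
Proof. by rewrite /bracketQ {1}/ev3 big_flatten big_map big_enum. Qed.

Theorem lemma5p3
  (k : fieldType) (hchar : [pchar k] =i pred0)
  (A : pzRingType) (fA : {rmorphism k -> A}) (hcent : central_image fA)
  (K : nat) (e : 'I_K -> A) (he : complete_orth_idem e)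
  (hfg : fin_gen_over_B fA e)
  (alpha : 'I_K -> nat)
  (R : comPzRingType) (fR : {rmorphism k -> R}) (rho : A -> 'M[R]_(dimN alpha))
  (hR : is_coord_ring fA e fR rho)
  (dd : ddertype A -> 'I_(dimN alpha) -> 'I_(dimN alpha) -> R -> R)
  (hdd : forall delta, is_double_der fA e delta ->
           forall i j, is_delta_ij fR rho delta i j (dd delta i j))
  (m : nat) (Q1 Q2 Q3 : 'I_m -> ddertype A)
  (hQ : forall t, [/\ is_double_der fA e (Q1 t), is_double_der fA e (Q2 t)
                    & is_double_der fA e (Q3 t)])
  (a b c : A) (i j k0 l u v : 'I_(dimN alpha)) :
  trXQ_eval Q1 Q2 Q3 dd (rho a i j) (rho b k0 l) (rho c u v)
  = ev3 rho (bracketQ Q1 Q2 Q3 a b c) u j i l k0 v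
    - ev3 rho (bracketQ Q1 Q2 Q3 a c b) k0 j i v u l.
Proof.
move: hR => [[_ [hmul _]] _].
have hD : forall t d, (d = Q1 t \/ d = Q2 t \/ d = Q3 t) -> forall p q b1 k1 l1,
    dd d p q (rho b1 k1 l1) = \sum_(w <- d b1) rho w.1 k1 q * rho w.2 p l1.
  move=> t d hd p q b1 k1 l1.
  have hdd' : is_double_der fA e d.
    by case: (hQ t) => ? ? ?; case: hd => [->|[->|->]].
  by case: (hdd d hdd' p q) => _ ->.
rewrite !ev3_bracketQ -sumrB /trXQ_eval; apply: eq_bigr => t _.
rewrite /bracket1 !ev3_cat !map_comp !ev3_tau.
under eq_bigr => p _ do under eq_bigr => q _ do under eq_bigr => r _ do rewrite wedge3E.
under eq_bigr => p _ do under eq_bigr => q _ do rewrite !(sumrB, big_split) /=.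
under eq_bigr => p _ do rewrite !(sumrB, big_split) /=.
rewrite !(sumrB, big_split) /=.
rewrite !(@key _ _ _ _ rho hmul dd _ _ _ (hD t)).
ring.
Qed.
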